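(* Consider a symmetric two-player game with pure strategy set $I=\{1,\dots,N\}$ and payoff matrix $\mathbf{U}=(u_{ij})$. Let $I'\subset I$. For $\mathbf{x}\in S_N$ define $\mathbf{x}'\in\mathbb{R}_+^N$ by $x'_i=x_i$ if $i\in I'$ and $x'_i=0$ otherwise, and let $x(I')=\sum_{i\in I'}x_i$; define $\mathbf{y}'$, $y(I')$ similarly. Let $(\mathbf{x},\mathbf{y})$ be a Nash equilibrium with $x(I')\,y(I')>0$, and assume that for all $i,j\in I'$, $$[\mathbf{U}(\mathbf{y}-\mathbf{y}')]_i=[\mathbf{U}(\mathbf{y}-\mathbf{y}')]_j\quad\text{and}\quad[\mathbf{U}(\mathbf{x}-\mathbf{x}')]_i=[\mathbf{U}(\mathbf{x}-\mathbf{x}')]_j.$$ Then for all $i,j\in I'$: if $x'_i>0$ then $(\mathbf{U}\mathbf{y}')_i\ge(\mathbf{U}\mathbf{y}')_j$, and if $y'_i>0$ then $(\mathbf{U}\mathbf{x}')_i\ge(\mathbf{U}\mathbf{x}')_j$.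
   Context: $S_N=\{\mathbf{x}\in\mathbb{R}_+^N:\sum_i x_i=1\}$. In the symmetric game, for the mixed profile $(\mathbf{x},\mathbf{y})$ the row player gets $\mathbf{x}\cdot\mathbf{U}\mathbf{y}$ and the column player gets $\mathbf{y}\cdot\mathbf{U}\mathbf{x}$; a Nash equilibrium is a pair of mutual best replies. *)

(* Defs.v *)
From mathcomp Require Import all_boot all_order all_algebra.
Set Implicit Arguments. Unset Strict Implicit. Unset Printing Implicit Defensive.
Import Order.TTheory GRing.Theory Num.Theory.
Local Open Scope ring_scope.

Definition dotv (R : ringType) (N : nat) (a b : 'cV[R]_N) : R :=
  \sum_(i < N) a i 0 * b i 0.

Definition simplex (R : realFieldType) (N : nat) (x : 'cV[R]_N) : Prop :=
  (forall i, 0 <= x i 0) /\ \sum_(i < N) x i 0 = 1.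

Definition nash_eq (R : realFieldType) (N : nat) (U : 'M[R]_N)
    (x y : 'cV[R]_N) : Prop :=
  simplex x /\ simplex y /\
  (forall z, simplex z -> dotv z (U *m y) <= dotv x (U *m y)) /\
  (forall z, simplex z -> dotv z (U *m x) <= dotv y (U *m x)).

Definition restr (R : ringType) (N : nat) (I' : {set 'I_N}) (x : 'cV[R]_N)
  : 'cV[R]_N := \col_i (if i \in I' then x i 0 else 0).

Definition mass (R : ringType) (N : nat) (I' : {set 'I_N}) (x : 'cV[R]_N) : R :=
  \sum_(i in I') x i 0.

(* Main.v *)
Require Import Defs.
From mathcomp Require Import all_boot all_order all_algebra.
Import Order.TTheory GRing.Theory Num.Theory.
Local Open Scope ring_scope.

Lemma sum_delta (R : ringType) N (j : 'I_N) (f : 'I_N -> R) :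
  \sum_(k < N) (k == j)%:R * f k = f j.
Proof.
rewrite (bigD1 j) //= eqxx mul1r big1 ?addr0 // => k /negbTE ->; by rewrite mul0r.
Qed.

Lemma sum_delta1 (R : ringType) N (j : 'I_N) :
  \sum_(k < N) (k == j)%:R = 1 :> R.
Proof.
rewrite -[RHS](@sum_delta R N j (fun _ => (1:R))).
by apply: eq_bigr => k _; rewrite mulr1.
Qed.

Lemma br (R : realFieldType) N (x v : 'cV[R]_N) (i j : 'I_N) :
  simplex x -> (forall z, simplex z -> dotv z v <= dotv x v) ->
  0 < x i 0 -> v j 0 <= v i 0.
Proof.
move=> [x0 x1] H xi.
pose z : 'cV[R]_N := \col_k (x k 0 + x i 0 * ((k == j)%:R - (k == i)%:R)).
have zs : simplex z.
  split.
    move=> k; rewrite mxE.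
    have xi0 := ltW xi.
    case: (eqVneq k i) => [->|_]; case: (_ == j) => /=.
    - by rewrite subrr mulr0 addr0.
    - by rewrite sub0r mulrN1 subrr.
    - by rewrite subr0 mulr1 addr_ge0.
    - by rewrite subrr mulr0 addr0.
  under eq_bigr do rewrite mxE.
  rewrite big_split /= x1 -mulr_sumr sumrB.
  by rewrite !sum_delta1 subrr mulr0 addr0.
have := H z zs; rewrite /dotv.
under eq_bigr do rewrite mxE mulrDl.
rewrite big_split /= -subr_le0 addrAC subrr add0r.
under eq_bigr do rewrite -mulrA mulrBl.
rewrite -mulr_sumr sumrB sum_delta sum_delta.
by rewrite pmulr_rle0 // subr_le0.
Qed.

Theorem lemma4 (R : realFieldType) (N : nat) (U : 'M[R]_N)
    (I' : {set 'I_N}) (x y : 'cV[R]_N) :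
  nash_eq U x y ->
  0 < mass I' x * mass I' y ->
  (forall i j, i \in I' -> j \in I' ->
     (U *m (y - restr I' y)) i 0 = (U *m (y - restr I' y)) j 0 /\
     (U *m (x - restr I' x)) i 0 = (U *m (x - restr I' x)) j 0) ->
  forall i j, i \in I' -> j \in I' ->
    (0 < restr I' x i 0 -> (U *m restr I' y) j 0 <= (U *m restr I' y) i 0) /\
    (0 < restr I' y i 0 -> (U *m restr I' x) j 0 <= (U *m restr I' x) i 0).
Proof.
move=> [sx [sy [Hx Hy]]] _ E i j iI jI.
have [Ey Ex] := E i j iI jI.
rewrite !mulmxBr !mxE in Ey Ex.
rewrite !mxE iI.
split=> pos.
  have := @br R N x (U *m y) i j sx Hx pos.
  by rewrite -(subrK (U *m restr I' y) (U *m y)) !mxE Ey lerD2l.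
have := @br R N y (U *m x) i j sy Hy pos.
by rewrite -(subrK (U *m restr I' x) (U *m x)) !mxE Ex lerD2l.
Qed.
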